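(* Let $\mathfrak{n}$ be a complex simple Lie algebra of type $C_n$ ($n\ge3$) and let $\mathfrak{n}=\mathfrak{n}_{-3}\oplus\cdots\oplus\mathfrak{n}_3$ be the $|3|$-grading associated to $\Sigma_i=\{\alpha_i,\alpha_n\}$, where $1\le i<n$. Then there is no graded isomorphism between $\mathfrak{F}_{r,3}$ and $\mathfrak{n}_{-3}\oplus\mathfrak{n}_{-2}\oplus\mathfrak{n}_{-1}$ (for any positive integer $r$).
   Context: Simple roots of $C_n$ are labeled in the standard way, with highest root $2\alpha_1+\cdots+2\alpha_{n-1}+\alpha_n$. For a root $\alpha=\sum a_l\alpha_l$ and a set $\Sigma$ of simple roots, $ht_\Sigma(\alpha)=\sum_{\alpha_l\in\Sigma}a_l$; the grading associated to $\Sigma$ is $\mathfrak{n}_m=\bigoplus_{ht_\Sigma(\alpha)=m}\mathfrak{g}_\alpha$ ($m\ne0$), $\mathfrak{n}_0=\mathfrak{h}\oplus\bigoplus_{ht_\Sigma(\alpha)=0}\mathfrak{g}_\alpha$, a $|3|$-grading since the highest root has $\Sigma_i$-height $3$. $\mathfrak{F}_{r,3}$ is the free nilpotent Lie algebra of step $3$ on $r$ generators with canonical grading $\mathfrak{f}_{-1}$ (span of generators), $\mathfrak{f}_{-2}=[\mathfrak{f}_{-1},\mathfrak{f}_{-1}]$, $\mathfrak{f}_{-3}=[\mathfrak{f}_{-1},\mathfrak{f}_{-2}]$; a graded isomorphism is a Lie algebra isomorphism mapping $\mathfrak{f}_{-m}$ onto $\mathfrak{n}_{-m}$ for $m=1,2,3$.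 *)

(* Defs.v *)
From HB Require Import structures.
From mathcomp Require Import all_boot all_order all_algebra.
From mathcomp Require Import reals complex.
Set Implicit Arguments. Unset Strict Implicit. Unset Printing Implicit Defensive.
Import Order.TTheory GRing.Theory Num.Theory.
Local Open Scope ring_scope.

Record lieAlgebra (K : fieldType) := LieAlgebra {
  lie_sort :> lmodType K;
  lie_br : lie_sort -> lie_sort -> lie_sort;
  lie_br_linl : forall (a : K) (x y z : lie_sort),
      lie_br (a *: x + y) z = a *: lie_br x z + lie_br y z;
  lie_br_linr : forall (a : K) (x y z : lie_sort),
      lie_br z (a *: x + y) = a *: lie_br z x + lie_br z y;
  lie_br_alt : forall x : lie_sort, lie_br x x = 0;
  lie_jacobi : forall x y z : lie_sort,
      lie_br x (lie_br y z) + lie_br y (lie_br z x) + lie_br z (lie_br x y) = 0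
}.

Definition nilpotent3 (K : fieldType) (L : lieAlgebra K) : Prop :=
  forall x y z w : L, lie_br x (lie_br y (lie_br z w)) = 0.

Definition lie_hom (K : fieldType) (L M : lieAlgebra K) (h : L -> M) : Prop :=
  (forall (a : K) (x y : L), h (a *: x + y) = a *: h x + h y) /\
  (forall x y : L, h (lie_br x y) = lie_br (h x) (h y)).

Definition free_nilpotent3 (K : fieldType) (r : nat) (L : lieAlgebra K)
    (iota : 'I_r -> L) : Prop :=
  nilpotent3 L /\
  forall (M : lieAlgebra K), nilpotent3 M -> forall g : 'I_r -> M,
    exists h : L -> M, [/\ lie_hom h, (forall j, h (iota j) = g j) &
      forall h' : L -> M, lie_hom h' -> (forall j, h' (iota j) = g j) ->
        forall x, h' x = h x].

Definition span (K : fieldType) (V : lmodType K) (S : V -> Prop) (v : V) : Prop :=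
  exists s : seq (K * V), (forall p, p \in s -> S p.2) /\
    v = \sum_(p <- s) p.1 *: p.2.

Definition fgr1 (K : fieldType) (r : nat) (L : lieAlgebra K) (iota : 'I_r -> L) :=
  span (fun v : L => exists j, v = iota j).
Definition fgr2 (K : fieldType) (r : nat) (L : lieAlgebra K) (iota : 'I_r -> L) :=
  span (fun v : L => exists x y, [/\ fgr1 iota x, fgr1 iota y & v = lie_br x y]).
Definition fgr3 (K : fieldType) (r : nat) (L : lieAlgebra K) (iota : 'I_r -> L) :=
  span (fun v : L => exists x y, [/\ fgr1 iota x, fgr2 iota y & v = lie_br x y]).
(* f_{-m} for m = 1, 2, 3 *)
Definition fgr (K : fieldType) (r : nat) (L : lieAlgebra K) (iota : 'I_r -> L)
    (m : nat) : L -> Prop :=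
  match m with 1 => fgr1 iota | 2 => fgr2 iota | 3 => fgr3 iota | _ => fun _ => False end.

(* The simple Lie algebra of type C_n: sp(2n, C), C = R[i]             *)
Section Cn.
Variable (R : realType).
Local Notation C := (complex R).

Definition Jmx (n : nat) : 'M[C]_(n + n) := block_mx 0 1%:M (- 1%:M) 0.

Definition in_sp (n : nat) (X : 'M[C]_(n + n)) : Prop :=
  X^T *m Jmx n + Jmx n *m X = 0.

Definition lie_comm (n : nat) (X Y : 'M[C]_(n + n)) : 'M[C]_(n + n) :=
  X *m Y - Y *m X.

(* Cartan subalgebra h: the diagonal matrices diag(d, -d); a linear form on h
   is identified with its coefficient vector a, via  D(d) |-> sum_k a_k d_k. *)
Definition cartan (n : nat) (d : 'rV[C]_n) : 'M[C]_(n + n) :=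
  diag_mx (row_mx d (- d)).

Definition root_space (n : nat) (a : 'rV[C]_n) (X : 'M[C]_(n + n)) : Prop :=
  in_sp X /\ forall d : 'rV[C]_n,
    lie_comm (cartan d) X = (\sum_(k < n) a 0 k * d 0 k) *: X.

Definition is_root (n : nat) (a : 'rV[C]_n) : Prop :=
  a != 0 /\ exists X, X != 0 /\ root_space a X.

(* simple roots, standard labelling 1..n:
   alpha_l = e_l - e_{l+1} (1 <= l < n), alpha_n = 2 e_n,
   highest root 2 e_1 = 2 alpha_1 + ... + 2 alpha_{n-1} + alpha_n *)
Definition simple_root (n l : nat) : 'rV[C]_n :=
  \row_(k < n)
    (if (l < n)%N then (k.+1 == l)%:R - (k.+1 == l.+1)%:R
     else if (l == n)%N then (k.+1 == n)%:R *+ 2 else 0).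

(* ht_Sigma(a) = m, where a = sum_l c_l alpha_l (unique expansion) *)
Definition ht_is (n : nat) (Sigma : seq nat) (a : 'rV[C]_n) (m : int) : Prop :=
  exists c : nat -> C,
    a = \sum_(1 <= l < n.+1) c l *: simple_root n l /\
    \sum_(1 <= l < n.+1 | l \in Sigma) c l = m%:~R.

Definition gpiece (n : nat) (Sigma : seq nat) (m : int) (X : 'M[C]_(n + n)) : Prop :=
  exists s : seq ('rV[C]_n * 'M[C]_(n + n)),
    (forall p, p \in s -> [/\ is_root p.1, ht_is Sigma p.1 m & root_space p.1 p.2])
    /\ X = \sum_(p <- s) p.2.

Definition neg_part (n : nat) (Sigma : seq nat) (X : 'M[C]_(n + n)) : Prop :=
  exists X1 X2 X3, [/\ gpiece Sigma (-1) X1, gpiece Sigma (-2) X2,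
    gpiece Sigma (-3) X3 & X = X1 + X2 + X3].

Definition graded_iso (n : nat) (Sigma : seq nat) (r : nat) (F : lieAlgebra C)
    (iota : 'I_r -> F) (phi : F -> 'M[C]_(n + n)) : Prop :=
  [/\ (forall (a : C) (x y : F), phi (a *: x + y) = a *: phi x + phi y),
      (forall x y : F, phi (lie_br x y) = lie_comm (phi x) (phi y)),
      injective phi,
      (forall X, neg_part Sigma X <-> exists x, phi x = X) &
      (forall m : nat, (1 <= m <= 3)%N -> forall X,
          gpiece Sigma (- (m%:Z)) X <-> exists x, fgr iota m x /\ phi x = X)].

End Cn.

(* Main.v *)
Require Import Defs.
From HB Require Import structures.
From mathcomp Require Import all_boot all_order all_algebra.
From mathcomp Require Import reals complex.
From mathcomp Require Import zify.
Set Implicit Arguments. Unset Strict Implicit. Unset Printing Implicit Defensive.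
Import Order.TTheory GRing.Theory Num.Theory.
Local Open Scope ring_scope.

Section Mat.
Variable R : realType.
Local Notation C := (complex R).
Variable n : nat.

Definition spA (A : 'M[C]_n) : 'M[C]_(n + n) := block_mx A 0 0 (- A^T).
Definition wt (k j : 'I_n) : 'rV[C]_n := \row_m ((m == k)%:R - (m == j)%:R).

Lemma bd_mul (A B A' B' : 'M[C]_n) :
  block_mx A 0 0 B *m block_mx A' 0 0 B' = block_mx (A *m A') 0 0 (B *m B').
Proof. by rewrite mulmx_block !mulmx0 !mul0mx !addr0 !add0r. Qed.

Lemma spA_in_sp A : in_sp (spA A).
Proof.
rewrite /in_sp /spA /Jmx tr_block_mx !trmx0 linearN /= trmxK.
rewrite !mulmx_block !mulmx0 !mul0mx !addr0 !add0r !mulmx1 !mul1mx.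
rewrite !mulmxN !mulNmx !mulmx1 !mul1mx opprK add_block_mx.
by rewrite !addr0 !subrr block_mx0.
Qed.

Lemma spA_comm A B : lie_comm (spA A) (spA B) = spA (A *m B - B *m A).
Proof.
rewrite /lie_comm /spA !bd_mul opp_block_mx add_block_mx !oppr0 !addr0.
congr block_mx; rewrite !mulmxN !mulNmx !opprK linearB /= !trmx_mul.
by rewrite opprB.
Qed.

Lemma sum_wt (k j : 'I_n) (d : 'rV[C]_n) :
  \sum_(m < n) wt k j 0 m * d 0 m = d 0 k - d 0 j.
Proof.
under eq_bigr do rewrite mxE mulrBl.
rewrite sumrB (bigD1 k) //= big1 ?addr0; last first.
  by move=> m /negbTE ->; rewrite mul0r.
rewrite (bigD1 j) //= big1 ?addr0; last first.
  by move=> m /negbTE ->; rewrite mul0r.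
by rewrite !eqxx !mul1r.
Qed.

Lemma spA_root (k j : 'I_n) : root_space (wt k j) (spA (delta_mx k j)).
Proof.
split; first exact: spA_in_sp.
move=> d; rewrite sum_wt /lie_comm /cartan diag_mx_row /spA !bd_mul.
rewrite opp_block_mx add_block_mx !oppr0 !addr0 scale_block_mx scaler0.
congr block_mx; apply/matrixP => p q; rewrite ?mul_diag_mx ?mul_mx_diag !mxE.
  case: (eqVneq p k) => [->|_]; case: (eqVneq q j) => [->|_] /=;
  by rewrite ?mulr1 ?mul1r ?mulr0 ?mul0r ?subr0.
case: (eqVneq p j) => [->|_]; case: (eqVneq q k) => [->|_] /=;
  rewrite ?andbF ?andbT /= ?mulr0n ?oppr0 ?mulr0 ?mul0r ?subr0 //.
by rewrite !mulrN1 mulN1r !opprK opprB.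
Qed.

Lemma sum_delta (i : nat) (G : nat -> C) : (1 <= i <= n)%N ->
  \sum_(1 <= l < n.+1) (l == i)%:R * G l = G i.
Proof.
case/andP=> i1 iN.
rewrite (@big_cat_nat _ _ _ i) //= ?ltnS ?(leqW iN) //.
rewrite [X in _ + X]big_ltn ?ltnS // eqxx mul1r addrCA.
rewrite big_nat_cond big1 ?add0r; last first.
  by move=> l /andP[/andP[_ lt] _]; rewrite (ltn_eqF lt) mul0r.
rewrite big_nat_cond big1 ?addr0 //.
by move=> l /andP[/andP[lt _] _]; rewrite eq_sym (ltn_eqF lt) mul0r.
Qed.

Lemma sigma_sum (i : nat) (c : nat -> C) : (1 <= i < n)%N ->
  c i = -1 -> c n = 0 ->
  \sum_(1 <= l < n.+1 | l \in [:: i; n]) c l = (- (1%:Z))%:~R.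
Proof.
move=> /andP[i1 iN] ci cn.
rewrite big_mkcond /= (eq_big_nat _ _ (F2 := fun l => - ((l == i)%:R * 1))).
  by rewrite sumrN sum_delta ?i1 ?(ltnW iN).
move=> l _; rewrite mulr1 !inE.
case: (eqVneq l i) => [->|li] /=; first by rewrite ci.
case: (eqVneq l n) => [->|ln] //=; last by rewrite oppr0.
by rewrite cn oppr0.
Qed.

Lemma htY (i : nat) (ki kj : 'I_n) : (1 <= i < n)%N ->
  val ki = i -> val kj = i.-1 ->
  ht_is [:: i; n] (wt ki kj) (- (1%:Z)).
Proof.
move=> Hi Eki Ekj; case/andP: (Hi) => i1 iN.
exists (fun l => - (l == i)%:R); split; last first.
  by apply: (sigma_sum (c := fun l => - (l == i)%:R)) => //=; rewrite ?eqxx // gtn_eqF // oppr0.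
apply/matrixP=> z m; rewrite ord1 summxE.
under eq_bigr do rewrite mxE mulNr -mulrN.
rewrite sum_delta ?i1 ?(ltnW iN) // !mxE iN.
rewrite -!(inj_eq val_inj) /= Eki Ekj eqSS opprB.
by have -> : (val m == i.-1) = (m.+1 == i) by case: (i) i1 => // i' _; rewrite eqSS.
Qed.

Lemma htX (i : nat) (ki kj : 'I_n) : (1 <= i < n)%N ->
  val ki = n.-1 -> val kj = 0%N ->
  ht_is [:: i; n] (wt ki kj) (- (1%:Z)).
Proof.
move=> Hi Eki Ekj; case/andP: (Hi) => i1 iN.
exists (fun l => - (l < n)%:R); split; last first.
  by apply: (sigma_sum (c := fun l => - (l < n)%:R)) => //=; rewrite ?iN ?ltnn ?oppr0.
apply/matrixP=> z m; rewrite ord1 summxE.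
under eq_bigr do rewrite mxE.
have n0 : (0 < n)%N by apply: leq_ltn_trans iN.
rewrite big_nat_recr //= ssrnat.ltnn oppr0 mul0r addr0.
rewrite (@telescope_sumr_eq _ 1 n (fun l => (m.+1 == l)%:R)) //; last first.
  by move=> l /andP[_ ln]; rewrite !mxE ln mulN1r opprB.
rewrite !mxE -!(inj_eq val_inj) /= Eki Ekj eqSS.
by case: n ki kj m Eki Ekj n0 {Hi iN} => // n' ki kj m _ _ _ /=; rewrite eqSS.
Qed.

Lemma spA_delta_neq0 (k j : 'I_n) : spA (delta_mx k j) != 0.
Proof.
apply/eqP => /matrixP /(_ (lshift n k) (lshift n j)).
by rewrite /spA block_mxEul !mxE !eqxx /= => /eqP; rewrite oner_eq0.
Qed.

Lemma gpiece_delta (Sg : seq nat) (z : int) (k j : 'I_n) : k != j ->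
  ht_is Sg (wt k j) z -> gpiece Sg z (spA (delta_mx k j)).
Proof.
move=> kj H; exists [:: (wt k j, spA (delta_mx k j))]; split; last first.
  by rewrite big_cons big_nil addr0.
move=> p; rewrite inE => /eqP -> /=; split=> //; last exact: spA_root.
split; last by exists (spA (delta_mx k j)); split; [exact: spA_delta_neq0 | exact: spA_root].
apply/eqP => /matrixP /(_ 0 k); rewrite !mxE eqxx (negbTE kj) subr0 => /eqP.
by rewrite oner_eq0.
Qed.
End Mat.
Section Lin.
Variables (K : fieldType) (U V : lmodType K) (f : U -> V).
Hypothesis lf : forall (a : K) x y, f (a *: x + y) = a *: f x + f y.
Lemma lf0 : f 0 = 0.
Proof.
have := lf 1 0 0; rewrite !scale1r addr0 => /esym /eqP.
by rewrite -[X in _ == X]add0r (inj_eq (addIr _)) => /eqP.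
Qed.
Lemma lfD x y : f (x + y) = f x + f y.
Proof. by have := lf 1 x y; rewrite !scale1r. Qed.
Lemma lfZ a x : f (a *: x) = a *: f x.
Proof. by have := lf a x 0; rewrite !addr0 lf0 addr0. Qed.
Lemma lfB x y : f (x - y) = f x - f y.
Proof. by rewrite lfD -scaleN1r lfZ scaleN1r. Qed.
Lemma lf_sum (I : Type) (s : seq I) (G : I -> U) :
  f (\sum_(p <- s) G p) = \sum_(p <- s) f (G p).
Proof.
elim: s => [|p s IH]; first by rewrite !big_nil lf0.
by rewrite !big_cons lfD IH.
Qed.
End Lin.

Section Heis.
Variables (K : fieldType) (r : nat).
Definition HT := ('rV[K]_r * 'M[K]_r)%type.
Definition hbr (u v : HT) : HT := (0, u.1^T *m v.1 - v.1^T *m u.1).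

Lemma hbr_linl (a : K) (x y z : HT) : hbr (a *: x + y) z = a *: hbr x z + hbr y z.
Proof.
rewrite /hbr /=; apply/eqP; rewrite xpair_eqE /= scaler0 addr0 eqxx /=; apply/eqP.
rewrite !linearD !linearZ /= ?mulmxDl ?mulmxDr -?scalemxAl -?scalemxAr.
by rewrite addrACA.
Qed.
Lemma hbr_linr (a : K) (x y z : HT) : hbr z (a *: x + y) = a *: hbr z x + hbr z y.
Proof.
rewrite /hbr /=; apply/eqP; rewrite xpair_eqE /= scaler0 addr0 eqxx /=; apply/eqP.
rewrite !linearD !linearZ /= ?mulmxDl ?mulmxDr -?scalemxAl -?scalemxAr.
by rewrite opprD scalerN addrACA.
Qed.
Lemma hbr_alt x : hbr x x = 0.
Proof. rewrite /hbr; apply/eqP; rewrite xpair_eqE /= subrr !eqxx //. Qed.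
Lemma hbr_00 x y z : hbr x (hbr y z) = 0.
Proof. rewrite /hbr /=; apply/eqP; rewrite xpair_eqE /= trmx0 mulmx0 mul0mx subrr !eqxx //. Qed.
Lemma hbr_jac x y z : hbr x (hbr y z) + hbr y (hbr z x) + hbr z (hbr x y) = 0.
Proof. by rewrite !hbr_00 !addr0. Qed.
Definition HL : lieAlgebra K := LieAlgebra hbr_linl hbr_linr hbr_alt hbr_jac.
Lemma HL_nil : nilpotent3 HL.
Proof. by move=> x y z w /=; rewrite hbr_00. Qed.
End Heis.

Section FreeSide.
Variables (K : fieldType) (r : nat) (F : lieAlgebra K) (iota : 'I_r -> F).
Variable h : F -> HL K r.
Hypothesis hl : lie_hom h.
Hypothesis hi : forall j, h (iota j) = (delta_mx 0 j, 0).

Lemma expand z : fgr1 iota z -> z = \sum_(j < r) (h z).1 0 j *: iota j.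
Proof.
case: hl => hlin hbr.
case=> s [Hs ->]; elim: s Hs => [|p s IH] Hs.
  rewrite big_nil lf0 //= big1 // => j _; by rewrite mxE scale0r.
have Hs' : forall q, q \in s -> exists j, q.2 = iota j.
  by move=> q qs; apply: Hs; rewrite inE qs orbT.
have [j Ej] := Hs p (mem_head _ _).
rewrite big_cons lfD // lfZ // Ej hi.
rewrite [X in _ = X](eq_bigr (fun k => p.1 * (delta_mx 0 j : 'rV_r) 0 k *: iota k
   + (h (\sum_(q <- s) q.1 *: q.2)).1 0 k *: iota k)); last first.
  by move=> k _; rewrite !mxE scalerDl.
rewrite big_split /= -IH //; congr (_ + _).
rewrite (bigD1 j) //= big1 ?addr0; first by rewrite mxE !eqxx mulr1.
by move=> k kj; rewrite mxE eqxx /= (negbTE kj) mulr0 scale0r.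
Qed.

Lemma dep x y : fgr1 iota x -> fgr1 iota y -> lie_br x y = 0 ->
  x = 0 \/ exists lam, y = lam *: x.
Proof.
move=> fx fy Hxy.
have Hl := hl; case: Hl => hlin hbr0.
have E : forall k l, (h x).1 0 k * (h y).1 0 l = (h y).1 0 k * (h x).1 0 l.
  have := hbr0 x y; rewrite Hxy lf0 // => /(congr1 snd) /= /esym /eqP.
  rewrite subr_eq0 => /eqP /matrixP E k l; have := E k l.
  by rewrite !mxE !big_ord1 !mxE.
have [k Hk|H0] := pickP (fun k => (h x).1 0 k != 0).
  right; pose lam := (h y).1 0 k / (h x).1 0 k; exists lam.
  have ey := expand fy; have ex := expand fx.
  rewrite {1}ey {1}ex scaler_sumr; apply: eq_bigr => l _.
  rewrite scalerA; congr (_ *: _).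
  apply: (mulfI Hk); rewrite E /lam mulrA mulrCA mulfV // mulr1 //.
left; rewrite (expand fx) big1 // => l _.
by move: (H0 l) => /= /negbFE /eqP ->; rewrite scale0r.
Qed.
End FreeSide.

Unset Implicit Arguments.
Theorem theorem4p7 (R : realType) (n i : nat) :
  (3 <= n)%N -> (1 <= i < n)%N ->
  forall (r : nat), (0 < r)%N ->
  forall (F : lieAlgebra (complex R)) (iota : 'I_r -> F),
    free_nilpotent3 iota ->
    ~ exists phi : F -> 'M[complex R]_(n + n),
        graded_iso [:: i; n] iota phi.
Proof.
move=> n3 Hi r r0 F iota [nil3 univ] [phi [plin pbr pinj pneg pgr]].
have /andP[i1 iN] := Hi.
have [h [hl hi _]] := univ (HL (complex R) r) (@HL_nil _ r)
  (fun j => (delta_mx 0 j, 0)).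
have n0 : (n.-1 < n)%N by case: (n) n3.
have n1 : (0 < n)%N by case: (n) n3.
have i0 : (i.-1 < n)%N by apply: leq_ltn_trans iN; apply: leq_pred.
pose kX := Ordinal n0; pose jX := Ordinal n1.
pose kY := Ordinal iN; pose jY := Ordinal i0.
have kjX : kX != jX by rewrite -(inj_eq val_inj) /=; case: (n) n3 => [|[|[|]]].
have kjY : kY != jY by rewrite -(inj_eq val_inj) /=; case: (i) i1 => // i' _ /=; rewrite gtn_eqF.
have gX := gpiece_delta kjX (@htX R n i kX jX Hi (erefl _) (erefl _)).
have gY := gpiece_delta kjY (@htY R n i kY jY Hi (erefl _) (erefl _)).
have [x [fx ex]] := (pgr 1%N (erefl _) _).1 gX.
have [y [fy ey]] := (pgr 1%N (erefl _) _).1 gY.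
have p0 : phi 0 = 0 by apply: lf0.
have xy : lie_br x y = 0.
  apply: pinj; rewrite pbr ex ey p0 spA_comm !mul_delta_mx_cond.
  have -> : (jX == kY) = false by rewrite -(inj_eq val_inj) /= eq_sym gtn_eqF.
  have -> : (jY == kX) = false.
    by rewrite -(inj_eq val_inj) /=; apply/eqP; lia.
  by rewrite !mulr0n subrr /spA trmx0 oppr0 block_mx0.
case: (dep hl hi fx fy xy) => [x0|[lam ylx]].
  by move: (@spA_delta_neq0 R n kX jX); rewrite -ex x0 p0 eqxx.
have := congr1 phi ylx; rewrite ey.
have -> : phi (lam *: x) = lam *: phi x by apply: lfZ.
rewrite ex => /matrixP /(_ (lshift n kY) (lshift n jY)).
rewrite /spA [X in _ = X -> _]mxE !block_mxEul !mxE !eqxx /=.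
have -> : (kY == kX) && (jY == jX) = false.
  by rewrite -!(inj_eq val_inj) /=; case: eqP => //= ?; apply/eqP; lia.
by rewrite mulr0 => /eqP; rewrite oner_eq0.
Qed.
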